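(* Dynamic A* with \texttt{reeval} set to true and using a dyn-monotonic, dyn-consistent dynamic heuristic never reopens a state, i.e., it never removes a state from Closed.
   Context: A transition system is $\mathcal T=\langle S,L,c,T,s_I,S_G\rangle$ with finite states $S$, finite labels $L$, cost function $c:L\to\mathbb R_{\ge0}$, transitions $T\subseteq S\times L\times S$, initial state $s_I$, goal states $S_G\subseteq S$. An information source $\sigma$ consists of a set $\mathcal I_\sigma$, $\iota_0^\sigma\in\mathcal I_\sigma$, $\mathrm{update}_\sigma:\mathcal I_\sigma\times T\to\mathcal I_\sigma$, $\mathrm{refine}_\sigma:\mathcal I_\sigma\times S\to\mathcal I_\sigma$. Reachable information: $\iota_n$ is reachable if obtained from $\iota_0^\sigma$ by a sequence of refine steps on states and update steps on transitions $e_1,\dots,e_n$, where each refined state and each origin of an updated transition is $s_I$ or the target of an earlier updated transition. A dynamic heuristic over $\sigma$ is $h:S\times\mathcal I_\sigma\to\mathbb R_{\ge0}\cup\{\infty\}$. It is dyn-consistent if $h(s,\iota)\le c(\ell)+h(s',\iota)$ for all $\langle s,\ell,s'\rangle\in T$ and all reachable $\iota$; and dyn-monotonic if $h(s,\iota)\le h(s,\mathrm{update}_\sigma(\iota,t))$ and $h(s,\iota)\le h(s,\mathrm{refine}_\sigma(\iota,s'))$ for all reachable $\iota$, all $s,s'\in S$, all $t\in T$. Parent source $\sigma_p$: $\mathcal I_{\sigma_p}$ = partial functions $S\rightharpoonup\mathbb R_{\ge0}\times(T\cup\{\bot\})$; $\iota_0=\{s_I\mapsto\langle0,\bot\rangle\}$;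 refine is the identity; $\mathrm{update}(\iota,\langle s,\ell,s'\rangle)$ with $\iota(s)=\langle g,\cdot\rangle$ changes only $s'$, setting it to $\langle g+c(\ell),\langle s,\ell,s'\rangle\rangle$ if $\iota(s')$ is undefined or has $g$-component $\ge g+c(\ell)$, otherwise unchanged. Dynamic A* takes $\mathcal T$, sources $\sigma_p,\sigma_h$, a dynamic heuristic $h$ over $\sigma_h$ and a Boolean flag \texttt{reeval}. Notation: at any moment $g(s)$ is the $g$-component of the current $\mathcal I(\sigma_p)(s)$ and $h(s)$ denotes $h(s,\mathcal I(\sigma_h))$ for the current $\mathcal I(\sigma_h)$. Open is a priority queue of entries $\langle s,g,h\rangle$ (duplicates allowed), popped by minimal stored value $g+h$ (ties arbitrary). Algorithm: 1. $\mathcal I(\sigma):=\iota_0^\sigma$ for both sources; $S_{\mathrm{known}}:=\{s_I\}$; Closed $:=\emptyset$; Open empty. If $h(s_I)<\infty$ insert $\langle s_I,g(s_I),h(s_I)\rangle$. 2. While Open is nonempty: pop an entry $\langle s,\hat g,\hat h\rangle$ of minimal $\hat g+\hat h$. If $s\in$ Closed, continue with the next iteration. Otherwise set $\mathcal I(\sigma):=\mathrm{refine}_\sigma(\mathcal I(\sigma),s)$ for both sources. If \texttt{reeval} is true and $\hat h<h(s)$: if $h(s)<\infty$ insert $\langle s,g(s),h(s)\rangle$; continue with the next iteration (this is a re-evaluation). Otherwise add $s$ to Closed ($s$ is expanded). If $s\in S_G$, return the path obtained by following the parent pointers of $\mathcal I(\sigma_p)$ from $s$ back to $s_I$. Otherwise,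 for each $t=\langle s,\ell,s'\rangle\in T$ in some order: let $old:=g(s')$ if $s'\in S_{\mathrm{known}}$ and undefined otherwise; set $\mathcal I(\sigma):=\mathrm{update}_\sigma(\mathcal I(\sigma),t)$ for both sources; add $s'$ to $S_{\mathrm{known}}$; if $h(s')=\infty$ skip $s'$; else if $old$ is undefined insert $\langle s',g(s'),h(s')\rangle$; else if $old>g(s')$, remove $s'$ from Closed if it is there (reopening) and insert $\langle s',g(s'),h(s')\rangle$. 3. Return ''unsolvable''. *)

(* Defs.v *)
From HB Require Import structures.
From mathcomp Require Import all_boot all_order all_algebra.
From mathcomp Require Import reals.
Set Implicit Arguments.
Unset Printing Implicit Defensive.
Import Order.TTheory GRing.Theory Num.Theory.
Local Open Scope ring_scope.

Definition trans (S L : finType) := (S * L * S)%type.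
Definition src  {S L : finType} (t : trans S L) : S := t.1.1.
Definition lab  {S L : finType} (t : trans S L) : L := t.1.2.
Definition tgt  {S L : finType} (t : trans S L) : S := t.2.

Record TS (R : realType) := {
  ts_S : finType;
  ts_L : finType;
  ts_c : ts_L -> R;
  ts_T : {set trans ts_S ts_L};
  ts_sI : ts_S;
  ts_SG : {set ts_S}
}.

Arguments ts_S {R} t.
Arguments ts_L {R} t.
Arguments ts_c {R} t _.
Arguments ts_T {R} t.
Arguments ts_sI {R} t.
Arguments ts_SG {R} t.

Definition wf_TS (R : realType) (M : TS R) : Prop :=
  forall l, 0 <= ts_c M l.

(* Extended non-negative values  R_{>=0} ∪ {∞}: None stands for ∞.     *)

Definition ext_le (R : realType) (x y : option R) : bool :=
  match x, y with
  | _, None => true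
  | None, Some _ => false
  | Some a, Some b => a <= b
  end.
Arguments ext_le {R} x y.

Definition ext_lt (R : realType) (x y : option R) : bool :=
  match x, y with
  | None, _ => false
  | Some _, None => true
  | Some a, Some b => a < b
  end.
Arguments ext_lt {R} x y.

Definition ext_addl (R : realType) (a : R) (y : option R) : option R :=
  match y with None => None | Some b => Some (a + b) end.
Arguments ext_addl {R} a y.

Record source (S L : finType) := {
  src_I : Type;
  src_init : src_I;
  src_update : src_I -> trans S L -> src_I;
  src_refine : src_I -> S -> src_I
}.

(* [reach_info sg iota ks]: iota is obtained from iota_0 by refine steps
   and update steps on transitions of T, where every refined state and
   every origin of an updated transition is s_I or the target of an
   earlier updated transition; ks lists those targets. *)
Inductive reach_info (R : realType) (M : TS R) (sg : source (ts_S M) (ts_L M))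
  : src_I sg -> seq (ts_S M) -> Prop :=
| ri_init : @reach_info R M sg (src_init sg) [::]
| ri_refine : forall i ks s,
    @reach_info R M sg i ks -> (s = ts_sI M \/ s \in ks) ->
    @reach_info R M sg (src_refine sg i s) ks
| ri_update : forall i ks t,
    @reach_info R M sg i ks -> t \in ts_T M ->
    (src t = ts_sI M \/ src t \in ks) ->
    @reach_info R M sg (src_update sg i t) (tgt t :: ks).

Definition reachable_info (R : realType) (M : TS R)
  (sg : source (ts_S M) (ts_L M)) (i : src_I sg) : Prop :=
  exists ks, @reach_info R M sg i ks.
Arguments reachable_info {R M} sg i.

Definition dyn_heuristic (R : realType) (M : TS R)
  (sg : source (ts_S M) (ts_L M)) :=
  ts_S M -> src_I sg -> option R.
Arguments dyn_heuristic {R M} sg.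

Definition heuristic_nonneg (R : realType) (M : TS R)
  (sg : source (ts_S M) (ts_L M)) (h : dyn_heuristic sg) : Prop :=
  forall s i v, h s i = Some v -> 0 <= v.
Arguments heuristic_nonneg {R M sg} h.

Definition dyn_consistent (R : realType) (M : TS R)
  (sg : source (ts_S M) (ts_L M)) (h : dyn_heuristic sg) : Prop :=
  forall t, t \in ts_T M -> forall i, reachable_info sg i ->
    ext_le (h (src t) i) (ext_addl (ts_c M (lab t)) (h (tgt t) i)).
Arguments dyn_consistent {R M sg} h.

Definition dyn_monotonic (R : realType) (M : TS R)
  (sg : source (ts_S M) (ts_L M)) (h : dyn_heuristic sg) : Prop :=
  forall i, reachable_info sg i ->
    (forall s t, t \in ts_T M -> ext_le (h s i) (h s (src_update sg i t))) /\
    (forall s s', ext_le (h s i) (h s (src_refine sg i s'))).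
Arguments dyn_monotonic {R M sg} h.

(* I = partial functions S ⇀ R_{>=0} × (T ∪ {⊥}); None = undefined,    *)
(* parent None = ⊥.                                                    *)

Definition pinfo (R : realType) (S L : finType) :=
  S -> option (R * option (trans S L)).

Definition parent_init (R : realType) (S L : finType) (sI : S) : pinfo R S L :=
  fun s => if s == sI then Some (0, None) else None.
Arguments parent_init R {S L} sI.

Definition parent_refine (R : realType) (S L : finType)
  (i : pinfo R S L) (_ : S) : pinfo R S L := i.
Arguments parent_refine {R S L} i _.

(* If iota(s) is undefined the update is left unspecified by the paper;
   we leave iota unchanged (this case never arises in Dynamic A-star). *)
Definition parent_update (R : realType) (S L : finType) (c : L -> R)
  (i : pinfo R S L) (t : trans S L) : pinfo R S L :=
  match i (src t) with
  | None => i
  | Some (g, _) =>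
      let gn := g + c (lab t) in
      let upd := match i (tgt t) with
                 | None => true
                 | Some (g', _) => gn <= g'
                 end in
      if upd then
        fun x => if x == tgt t then Some (gn, Some t) else i x
      else i
  end.
Arguments parent_update {R S L} c i t.

Definition parent_source (R : realType) (M : TS R) : source (ts_S M) (ts_L M) :=
  {| src_I := pinfo R (ts_S M) (ts_L M);
     src_init := parent_init R (ts_sI M);
     src_update := parent_update (ts_c M);
     src_refine := parent_refine |}.

(* g-component of the current parent information (0 if undefined; in
   Dynamic A-star it is only read on known states, where it is defined). *)
Definition gof (R : realType) (S L : finType) (i : pinfo R S L) (s : S) : R :=
  match i s with Some (g, _) => g | None => 0 end.
Arguments gof {R S L} i s.

(* Nondeterminism: tie-breaking in Open and the order in which the     *)
(* outgoing transitions of an expanded state are processed.            *)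

Inductive status := Running | Finished.

Record config (R : realType) (M : TS R) (sh : source (ts_S M) (ts_L M)) := {
  c_ip : pinfo R (ts_S M) (ts_L M);
  c_ih : src_I sh;
  c_known : {set ts_S M};
  c_closed : {set ts_S M};
  c_open : seq (ts_S M * R * R);             (* entries <s, g, h> *)
  c_pending : seq (trans (ts_S M) (ts_L M)); (* rest of the for-loop *)
  c_status : status
}.

Definition mkcfg (R : realType) (M : TS R) (sh : source (ts_S M) (ts_L M))
  ip ih known closed op pend st : config M sh :=
  {| c_ip := ip; c_ih := ih; c_known := known; c_closed := closed;
     c_open := op; c_pending := pend; c_status := st |}.
Arguments mkcfg {R M sh} ip ih known closed op pend st.

Definition entry_key (R : realType) (S : Type) (e : S * R * R) : R :=
  e.1.2 + e.2.
Arguments entry_key {R S} e.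

Definition init_config (R : realType) (M : TS R) (sh : source (ts_S M) (ts_L M))
  (h : dyn_heuristic sh) : config M sh :=
  let ip := parent_init R (ts_sI M) in
  let ih := src_init sh in
  mkcfg ip ih [set ts_sI M] set0
    (match h (ts_sI M) ih with
     | Some v => [:: (ts_sI M, gof ip (ts_sI M), v)]
     | None => [::]
     end)
    [::] Running.
Arguments init_config {R M sh} h.

Inductive astar_step (R : realType) (M : TS R) (sh : source (ts_S M) (ts_L M))
  (h : dyn_heuristic sh) (reeval : bool) : config M sh -> config M sh -> Prop :=
| st_unsolvable : forall (ip : pinfo R (ts_S M) (ts_L M)) (ih : src_I sh) (kn cl : {set ts_S M}),
    @astar_step R M sh h reeval (mkcfg ip ih kn cl [::] [::] Running)
                        (mkcfg ip ih kn cl [::] [::] Finished)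
| st_pop_closed : forall (ip : pinfo R (ts_S M) (ts_L M)) (ih : src_I sh) (kn cl : {set ts_S M}) (op : seq (ts_S M * R * R)) (e : ts_S M * R * R),
    e \in op -> (forall e', e' \in op -> entry_key e <= entry_key e') ->
    e.1.1 \in cl ->
    @astar_step R M sh h reeval (mkcfg ip ih kn cl op [::] Running)
                        (mkcfg ip ih kn cl (rem e op) [::] Running)
| st_reeval : forall (ip : pinfo R (ts_S M) (ts_L M)) (ih : src_I sh) (kn cl : {set ts_S M}) (op : seq (ts_S M * R * R)) (e : ts_S M * R * R),
    e \in op -> (forall e', e' \in op -> entry_key e <= entry_key e') ->
    e.1.1 \notin cl ->
    let s := e.1.1 in
    let ip' := parent_refine ip s in
    let ih' := src_refine sh ih s in
    reeval && ext_lt (Some e.2) (h s ih') ->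
    @astar_step R M sh h reeval (mkcfg ip ih kn cl op [::] Running)
      (mkcfg ip' ih' kn cl
         (match h s ih' with
          | Some v => rcons (rem e op) (s, gof ip' s, v)
          | None => rem e op
          end) [::] Running)
| st_expand_goal : forall (ip : pinfo R (ts_S M) (ts_L M)) (ih : src_I sh) (kn cl : {set ts_S M}) (op : seq (ts_S M * R * R)) (e : ts_S M * R * R),
    e \in op -> (forall e', e' \in op -> entry_key e <= entry_key e') ->
    e.1.1 \notin cl ->
    let s := e.1.1 in
    let ip' := parent_refine ip s in
    let ih' := src_refine sh ih s in
    ~~ (reeval && ext_lt (Some e.2) (h s ih')) ->
    s \in ts_SG M ->
    @astar_step R M sh h reeval (mkcfg ip ih kn cl op [::] Running)
      (mkcfg ip' ih' kn (s |: cl) (rem e op) [::] Finished)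
| st_expand : forall (ip : pinfo R (ts_S M) (ts_L M)) (ih : src_I sh) (kn cl : {set ts_S M}) (op : seq (ts_S M * R * R)) (e : ts_S M * R * R) (pend : seq (trans (ts_S M) (ts_L M))),
    e \in op -> (forall e', e' \in op -> entry_key e <= entry_key e') ->
    e.1.1 \notin cl ->
    let s := e.1.1 in
    let ip' := parent_refine ip s in
    let ih' := src_refine sh ih s in
    ~~ (reeval && ext_lt (Some e.2) (h s ih')) ->
    s \notin ts_SG M ->
    perm_eq pend (enum [set t in ts_T M | src t == s]) ->
    @astar_step R M sh h reeval (mkcfg ip ih kn cl op [::] Running)
      (mkcfg ip' ih' kn (s |: cl) (rem e op) pend Running)
| st_succ : forall (ip : pinfo R (ts_S M) (ts_L M)) (ih : src_I sh) (kn cl : {set ts_S M}) (op : seq (ts_S M * R * R)) (t : trans (ts_S M) (ts_L M)) (pend : seq (trans (ts_S M) (ts_L M))),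
    let s' := tgt t in
    let old := if s' \in kn then Some (gof ip s') else None in
    let ip' := parent_update (ts_c M) ip t in
    let ih' := src_update sh ih t in
    let kn' := s' |: kn in
    let g' := gof ip' s' in
    @astar_step R M sh h reeval (mkcfg ip ih kn cl op (t :: pend) Running)
      (match h s' ih' with
       | None => mkcfg ip' ih' kn' cl op pend Running
       | Some v =>
           match old with
           | None => mkcfg ip' ih' kn' cl (rcons op (s', g', v)) pend Running
           | Some go =>
               if g' < go then
                 mkcfg ip' ih' kn' (cl :\ s') (rcons op (s', g', v)) pend Running
               else mkcfg ip' ih' kn' cl op pend Running
           end
       end).
Arguments astar_step {R M sh} h reeval _ _.

Inductive astar_reachable (R : realType) (M : TS R) (sh : source (ts_S M) (ts_L M))
  (h : dyn_heuristic sh) (reeval : bool) : config M sh -> Prop :=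
| ar_init : @astar_reachable R M sh h reeval (init_config h)
| ar_step : forall c c', @astar_reachable R M sh h reeval c -> astar_step h reeval c c' ->
    @astar_reachable R M sh h reeval c'.
Arguments astar_reachable {R M sh} h reeval _.

(* Main.v *)
Require Import Defs.
From mathcomp Require Import all_boot all_order all_algebra.
From mathcomp Require Import reals lra.
Set Implicit Arguments.
Unset Strict Implicit.
Unset Printing Implicit Defensive.
Import Order.TTheory GRing.Theory Num.Theory.
Local Open Scope ring_scope.

Inductive pc (R : realType) (M : TS R) : ts_S M -> R -> Prop :=
| pc0 : pc (ts_sI M) 0
| pcS : forall t g, pc (src t) g -> t \in ts_T M -> pc (tgt t) (g + ts_c M (lab t)).
Arguments pc {R} M _ _.

Lemma ext_le_trans (R : realType) (a b d : option R) : ext_le a b -> ext_le b d -> ext_le a d.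
Proof. case: a => [a|]; case: b => [b|]; case: d => [d|] //=; exact: le_trans. Qed.

Lemma ext_le_add (R : realType) (a b d : option R) u v :
  ext_le a (ext_addl u b) -> ext_le b (ext_addl v d) -> ext_le a (ext_addl (u + v) d).
Proof. case: a => [a|]; case: b => [b|]; case: d => [d|] //=; lra. Qed.

Lemma ext_le_refl0 (R : realType) (a : option R) : ext_le a (ext_addl 0 a).
Proof. by case: a => [a|] //=; rewrite add0r lexx. Qed.

Lemma pu_val (R : realType) (S L : finType) (c : L -> R) (ip : pinfo R S L) t x :
  parent_update c ip t x =
  match ip (src t) with
  | Some (g,_) => if (x == tgt t) && (match ip (tgt t) with None => true | Some (g',_) => g + c (lab t) <= g' end)
                  then Some (g + c (lab t), Some t) else ip x
  | None => ip x end.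
Proof.
rewrite /parent_update; case: (ip (src t)) => [[g p]|] //.
case: (ip (tgt t)) => [[g' p']|] /=; last by rewrite andbT.
by case: (g + c (lab t) <= g'); rewrite ?andbT ?andbF.
Qed.

Record Inv (R : realType) (M : TS R) (sh : source (ts_S M) (ts_L M)) (h : dyn_heuristic sh)
  (ip : pinfo R (ts_S M) (ts_L M)) (ih : src_I sh) (kn cl : {set ts_S M})
  (op : seq (ts_S M * R * R)) (pend : seq (trans (ts_S M) (ts_L M))) : Prop := {
  i1 : exists ks, @reach_info R M sh ih ks /\ forall x, x \in kn -> x = ts_sI M \/ x \in ks;
  i2 : ts_sI M \in kn;
  i2b : gof ip (ts_sI M) <= 0;
  i3 : forall x, x \in kn -> exists g p, ip x = Some (g, p) /\ pc M x g;
  i4 : forall e, e \in op -> [/\ e.1.1 \in kn, gof ip e.1.1 <= e.1.2 & ext_le (Some e.2) (h e.1.1 ih)];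
  i5 : forall x, x \in cl -> x \in kn /\ forall C, pc M x C -> gof ip x <= C;
  i6 : forall x t, x \in cl -> t \in ts_T M -> src t = x -> t \notin pend ->
         tgt t \in kn /\ gof ip (tgt t) <= gof ip x + ts_c M (lab t);
  i7 : forall x, x \in kn -> x \notin cl -> h x ih <> None ->
         exists2 e, e \in op & e.1.1 = x /\ e.1.2 <= gof ip x;
  i8 : forall t, t \in pend -> t \in ts_T M /\ src t \in cl;
  i9 : forall x, ip x <> None -> x \in kn
}.

Definition inv (R : realType) (M : TS R) (sh : source (ts_S M) (ts_L M)) (h : dyn_heuristic sh)
  (c : config M sh) : Prop :=
  c_status c = Running -> Inv h (c_ip c) (c_ih c) (c_known c) (c_closed c) (c_open c) (c_pending c).

Lemma init_inv (R : realType) (M : TS R) (sh : source (ts_S M) (ts_L M)) (h : dyn_heuristic sh) :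
  inv h (init_config h).
Proof.
move=> _; rewrite /init_config /=.
have gI : gof (parent_init R (ts_sI M)) (ts_sI M) = 0 by rewrite /gof /parent_init eqxx.
split.
- exists [::]; split; first exact: ri_init.
  by move=> x; rewrite inE => /eqP ->; left.
- by rewrite inE.
- by rewrite gI.
- move=> x; rewrite inE => /eqP ->; exists 0, None; split; last exact: pc0.
  by rewrite /parent_init eqxx.
- move=> e; case E: (h (ts_sI M) (src_init sh)) => [v|] //.
  by rewrite inE => /eqP -> /=; rewrite inE eqxx E /=; split.
- by move=> x; rewrite in_set0.
- by move=> x t; rewrite in_set0.
- move=> x; rewrite inE => /eqP -> _.
  case E: (h (ts_sI M) (src_init sh)) => [v|] // _.
  by eexists; [apply: mem_head | split].
- by move=> t; rewrite in_nil.
- move=> x; rewrite /parent_init inE; by case: (x == ts_sI M).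
Qed.

Lemma path_lemma (R : realType) (M : TS R) (sh : source (ts_S M) (ts_L M)) (h : dyn_heuristic sh)
  ip ih kn cl op (i' : src_I sh) :
  Inv h ip ih kn cl op [::] -> dyn_consistent h -> reachable_info sh i' ->
  forall x C, pc M x C -> x \in cl \/ exists y Cy,
    [/\ y \in kn, y \notin cl, gof ip y <= Cy & ext_le (h y i') (ext_addl (C - Cy) (h x i'))].
Proof.
move=> I Hc Hr x C; elim => [|t g Hp IH Ht].
- case: (boolP (ts_sI M \in cl)) => H; [by left | right].
  exists (ts_sI M), 0; split => //; [exact: i2 I | exact: i2b I | rewrite subrr; exact: ext_le_refl0].
- case: (boolP (tgt t \in cl)) => Htc; [by left | right].
  case: IH => [Hs | [y [Cy [Hy1 Hy2 Hy3 Hy4]]]].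
  + have := i6 I Hs Ht erefl; rewrite in_nil => /(_ isT) [Hk Hle].
    exists (tgt t), (g + ts_c M (lab t)); split => //.
    * apply: (le_trans Hle); rewrite lerD2r; exact: (i5 I Hs).2.
    * rewrite subrr; exact: ext_le_refl0.
  + exists y, Cy; split => //.
    have -> : g + ts_c M (lab t) - Cy = (g - Cy) + ts_c M (lab t) by rewrite addrAC.
    apply: ext_le_add Hy4 _; exact: Hc.
Qed.

Lemma mem_rem_neq (T : eqType) (s : seq T) x y : x \in s -> y \in s -> y != x -> y \in rem x s.
Proof. move=> Hx Hy Hne; move: (perm_mem (perm_to_rem Hx) y); rewrite Hy inE (negbTE Hne) /=; by move <-. Qed.

Lemma reach_refine (R : realType) (M : TS R) (sh : source (ts_S M) (ts_L M)) (h : dyn_heuristic sh)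
  ip ih kn cl op pend s :
  Inv h ip ih kn cl op pend -> s \in kn -> exists ks, @reach_info R M sh (src_refine sh ih s) ks.
Proof.
move=> I Hs; have [ks [Hk Hkn]] := i1 I; exists ks; apply: ri_refine => //; exact: Hkn.
Qed.

Lemma expand_key (R : realType) (M : TS R) (sh : source (ts_S M) (ts_L M)) (h : dyn_heuristic sh)
  ip ih kn cl op e :
  Inv h ip ih kn cl op [::] -> dyn_consistent h -> dyn_monotonic h -> e \in op ->
  (forall e', e' \in op -> entry_key e <= entry_key e') -> e.1.1 \notin cl ->
  ~~ ext_lt (Some e.2) (h e.1.1 (src_refine sh ih e.1.1)) ->
  forall C, pc M e.1.1 C -> gof ip e.1.1 <= C.
Proof.
move=> I Hc Hm He Hmin Hcl Hnlt C HC.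
have [Hsk _ _] := i4 I He.
have Hr : reachable_info sh (src_refine sh ih e.1.1) by exact: reach_refine I Hsk.
have [ks [Hks _]] := i1 I.
have Hrih : reachable_info sh ih by exists ks.
case: (path_lemma I Hc Hr HC) => [Hin|[y [Cy [Hy1 Hy2 Hy3 Hy4]]]]; first by rewrite Hin in Hcl.
move: Hnlt Hy4; case Es: (h e.1.1 (src_refine sh ih e.1.1)) => [hs|] //=; rewrite -leNgt => Hhs.
case Ey: (h y (src_refine sh ih e.1.1)) => [hy|] //= Hhy.
have Hmy := (Hm ih Hrih).2 y e.1.1; rewrite Ey in Hmy.
move: Hmy; case Ey0: (h y ih) => [hy0|] //= Hhy0.
have [e' He' [Hey1 Hey2]] := i7 I Hy1 Hy2 (ltac:(by rewrite Ey0)).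
have [_ _ Hx] := i4 I He'; rewrite Hey1 Ey0 /= in Hx.
have [_ Hg _] := i4 I He.
have := Hmin e' He'; rewrite /entry_key; lra.
Qed.

Lemma step_inv (R : realType) (M : TS R) (sh : source (ts_S M) (ts_L M)) (h : dyn_heuristic sh) :
  dyn_consistent h -> dyn_monotonic h ->
  forall c c', inv h c -> astar_step h true c c' -> inv h c' /\ c_closed c \subset c_closed c'.
Proof.
move=> Hc Hm c c' Hi Hst; case: Hst Hi.
- by split => //=; apply: subxx.
- move=> ip ih kn cl op e He Hmin Hcl /(_ erefl) I; split; last by apply: subxx.
  move=> _ /=.
  case: (I) => I1 I2 I2b I3 I4 I5 I6 I7 I8 I9; split => //.
  + by move=> e' /mem_rem; exact: I4.
  + move=> x Hx Hxc Hh; have [e' He' [Hx1 Hx2]] := I7 x Hx Hxc Hh; exists e' => //.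
    apply: mem_rem_neq => //; apply/eqP => Ee; move: Hcl; rewrite -Ee Hx1 => Hb.
    by rewrite Hb in Hxc.
- move=> ip ih kn cl op e He Hmin Hcl s ip' ih' Hlt /(_ erefl) I; split; last by apply: subxx.
  move=> _.
  rewrite /ip' /parent_refine /ih' /s /= {ip' ih' s Hlt}.
  case: (I) => I1 I2 I2b I3 I4 I5 I6 I7 I8 I9.
  have [Hsk _ _] := I4 e He.
  have Hr := reach_refine I Hsk.
  have [ks [Hks Hkn]] := I1.
  have Hrih : reachable_info sh ih by exists ks.
  have Hmo := (Hm ih Hrih).2.
  set op' := match _ with Some _ => _ | None => _ end.
  have Hsub : forall y, y \in rem e op -> y \in op'.
    by move=> y; rewrite /op'; case: (h _ _) => [v|] //; rewrite mem_rcons inE => ->; rewrite orbT.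
  split => //.
  + exists ks; split; [apply: ri_refine => //; exact: Hkn | exact: Hkn].
  + move=> e'; rewrite /op'; case E: (h _ _) => [v|].
    * rewrite mem_rcons inE => /orP [/eqP -> | /mem_rem He'] /=.
        by rewrite E /=; split.
      have [H1 H2 H3] := I4 e' He'; split => //; apply: ext_le_trans H3 _; exact: Hmo.
    * move/mem_rem => He'; have [H1 H2 H3] := I4 e' He'; split => //; apply: ext_le_trans H3 _; exact: Hmo.
  + move=> x Hx Hxc Hh; case: (eqVneq x e.1.1) => [Ex | Nx].
    * move: Hh; rewrite /op' Ex; case E: (h _ _) => [v|] // _.
      by exists (e.1.1, gof ip e.1.1, v); [rewrite mem_rcons mem_head | split].
    * have Hh0 : h x ih <> None.
        by move: (Hmo x e.1.1) Hh; case: (h x ih) => //; case: (h x _).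
      have [e' He' [Hx1 Hx2]] := I7 x Hx Hxc Hh0; exists e' => //.
      apply: Hsub; apply: mem_rem_neq => //; apply/eqP => Ee; move: Nx; by rewrite -Hx1 Ee eqxx.
- move=> *; split => //=; apply/subsetP => x Hx; by rewrite !inE Hx orbT.
- move=> ip ih kn cl op e pend He Hmin Hcl s ip' ih' Hnlt Hng Hperm /(_ erefl) I; split; last by apply/subsetP => x Hx; rewrite /= !inE Hx orbT.
  move=> _.
  rewrite /ip' /parent_refine /ih' /s /= in Hnlt *.
  have Hkey := expand_key I Hc Hm He Hmin Hcl Hnlt.
  rewrite -/s in Hcl Hkey Hperm.
  have Hpm : forall t, (t \in pend) = (t \in ts_T M) && (src t == s).
    by move=> t; rewrite (perm_mem Hperm) mem_enum inE.
  case: (I) => I1 I2 I2b I3 I4 I5 I6 I7 I8 I9.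
  have [Hsk _ _] := I4 e He.
  have [ks [Hks Hkn]] := I1.
  have Hrih : reachable_info sh ih by exists ks.
  have Hmo := (Hm ih Hrih).2.
  split => //.
  + exists ks; split; [apply: ri_refine => //; exact: Hkn | exact: Hkn].
  + move=> e' /mem_rem He'; have [H1 H2 H3] := I4 e' He'; split => //; apply: ext_le_trans H3 _; exact: Hmo.
  + move=> x; rewrite !inE => /orP [/eqP -> | Hx]; last exact: I5.
    by split.
  + move=> x t; rewrite !inE => /orP [/eqP -> | Hx] Ht Hsrc.
    * by rewrite Hpm Ht Hsrc eqxx.
    * move=> _; apply: I6 => //; by rewrite in_nil.
  + move=> x Hx; rewrite !inE negb_or => /andP [Nx Hxc] Hh.
    have Hh0 : h x ih <> None.
      by move: (Hmo x s) Hh; case: (h x ih) => //; case: (h x _).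
    have [e' He' [Hx1 Hx2]] := I7 x Hx Hxc Hh0; exists e' => //.
    apply: mem_rem_neq => //; apply/eqP => Ee; move: Nx; by rewrite -Hx1 Ee eqxx.
  + move=> t; rewrite Hpm => /andP [Ht /eqP Hs]; by rewrite Hs !inE eqxx.
- move=> ip ih kn cl op t pend s' old ip' ih' kn' g' /(_ erefl) /= I.
  case: (I) => I1 I2 I2b I3 I4 I5 I6 I7 I8 I9.
  have [Ht Hsc] := I8 t (mem_head _ _).
  have [Hsk Hsopt] := I5 _ Hsc.
  have [g0 [p0 [Eg0 Hpc0]]] := I3 _ Hsk.
  have Gs0 : gof ip (src t) = g0 by rewrite /gof Eg0.
  have [ks [Hks Hkn]] := I1.
  have Hrih : reachable_info sh ih by exists ks.
  have Hmo := (Hm ih Hrih).1.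
  set gn := g0 + ts_c M (lab t).
  have Hval : forall x, ip' x = if (x == s') && (match ip s' with None => true | Some (g'', _) => gn <= g'' end)
                               then Some (gn, Some t) else ip x.
    by move=> x; rewrite /ip' pu_val Eg0.
  have F1 : forall x, x != s' -> ip' x = ip x by move=> x Nx; rewrite Hval (negbTE Nx).
  have F1g : forall x, x != s' -> gof ip' x = gof ip x by move=> x Nx; rewrite /gof F1.
  have Fs' : ip' s' = Some (gn, Some t) \/
             (ip' s' = ip s' /\ exists go p, ip s' = Some (go, p) /\ go < gn).
    rewrite Hval eqxx /=; case E: (ip s') => [[go p]|]; last by left.
    case: leP => Hle; [by left | right; split => //; by exists go, p].
  have F4 : forall x, ip x <> None -> gof ip' x <= gof ip x.
    move=> x; case: (eqVneq x s') => [-> | Nx]; last by rewrite F1g.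
    case: Fs' => [E | [E _]]; last by rewrite /gof E.
    move=> Hd; rewrite /gof E; move: E Hd; rewrite Hval eqxx /=.
    case: (ip s') => [[go p]|] //; case: leP => // Hl [Eg _] _; subst go; by rewrite ltxx in Hl.
  have F5 : gof ip' s' <= gn.
    case: Fs' => [E | [E [go [p [E2 Hlt]]]]]; rewrite /gof E //; rewrite E2; exact: ltW.
  have F3 : forall x, x \in cl -> gof ip' x = gof ip x.
    move=> x Hx; case: (eqVneq x s') => [Ex | Nx]; last by rewrite F1g.
    have [Hxk Hxo] := I5 x Hx.
    have Hpn : pc M s' gn by exact: pcS.
    apply/eqP; rewrite eq_le F4 /=; last by have [? [? [-> _]]] := I3 x Hxk.
    rewrite Ex; case: Fs' => [E | [E _]]; last by rewrite /gof E.
    rewrite [gof ip' s']/gof E -Ex; apply: Hxo; rewrite Ex; exact: Hpn.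
  have Hdef : forall x, x \in kn -> ip x <> None by move=> x /I3 [? [? [-> _]]].
  have Hmain : forall op', (op' = op /\ (h s' ih' = None \/ (s' \in kn /\ gof ip' s' = gof ip s')))
                  \/ (exists v, h s' ih' = Some v /\ op' = rcons op (s', g', v)) ->
               inv h (mkcfg ip' ih' kn' cl op' pend Running) /\ cl \subset cl.
    move=> op' Hop; split; last by apply: subxx.
    move=> _ /=.
    have Hsub : forall y, y \in op -> y \in op'.
      move=> y Hy; case: Hop => [[-> _] | [v [_ ->]]] //; by rewrite mem_rcons inE Hy orbT.
    split.
    + exists (s' :: ks); split; first by apply: ri_update => //; exact: Hkn.
      move=> x; rewrite !inE => /orP [/eqP -> | /Hkn [-> | H]]; [by right; exact: mem_head | by left | by right; rewrite H orbT].
    + by rewrite !inE I2 orbT.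
    + exact: le_trans (F4 _ (Hdef _ I2)) I2b.
    + move=> x; rewrite !inE => /orP [/eqP -> | Hx].
      * case: Fs' => [E | [E [go [p [E2 _]]]]].
          by exists gn, (Some t); split => //; exact: pcS.
        rewrite E; apply: I3; apply: I9; by rewrite E2.
      * case: (eqVneq x s') => [-> | Nx].
          case: Fs' => [E | [E [go [p [E2 _]]]]].
            by exists gn, (Some t); split => //; exact: pcS.
          rewrite E; apply: I3; apply: I9; by rewrite E2.
        rewrite F1 //; exact: I3.
    + move=> e He.
      have Hnew : e = (s', g', 0) \/ true by right.
      case: Hop He => [[-> _] He | [v [Ev ->]]].
      * have [H1 H2 H3] := I4 e He; split.
        -- by rewrite !inE H1 orbT.
        -- exact: le_trans (F4 _ (Hdef _ H1)) H2.
        -- apply: ext_le_trans H3 _; exact: Hmo.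
      * rewrite mem_rcons inE => /orP [/eqP -> | He] /=.
          by rewrite !inE eqxx Ev /=; split.
        have [H1 H2 H3] := I4 e He; split.
        -- by rewrite !inE H1 orbT.
        -- exact: le_trans (F4 _ (Hdef _ H1)) H2.
        -- apply: ext_le_trans H3 _; exact: Hmo.
    + move=> x Hx; rewrite F3 //; split; [by rewrite !inE (I5 x Hx).1 orbT | exact: (I5 x Hx).2].
    + move=> x t1 Hx Ht1 Hsrc Hnp.
      case: (eqVneq t1 t) => [Et | Nt].
      * rewrite Et; split; first by rewrite !inE eqxx.
        rewrite (F3 x Hx) -Hsrc Et Gs0; exact: F5.
      * have := I6 x t1 Hx Ht1 Hsrc; rewrite inE negb_or Nt Hnp => /(_ isT) [H1 H2].
        split; first by rewrite !inE H1 orbT.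
        rewrite (F3 x Hx); exact: le_trans (F4 _ (Hdef _ H1)) H2.
    + move=> x Hx Hxc Hh; case: (eqVneq x s') => [Ex | Nx].
      * rewrite Ex in Hh Hxc *.
        case: Hop => [[Eop [E | [Hsk' Eg]]] | [v [Ev Eop]]].
        -- by rewrite E in Hh.
        -- have Hh0 : h s' ih <> None.
             by move: (Hmo s' t Ht) Hh; rewrite -/ih'; case: (h s' ih) => //; case: (h s' ih').
           have [e' He' [Hx1 Hx2]] := I7 s' Hsk' Hxc Hh0; exists e'; first by rewrite Eop.
           by rewrite Eg.
        -- by exists (s', g', v); [rewrite Eop mem_rcons mem_head | split].
      * have Hxk : x \in kn by move: Hx; rewrite !inE (negbTE Nx).
        have Hh0 : h x ih <> None.
          by move: (Hmo x t Ht) Hh; rewrite -/ih'; case: (h x ih) => //; case: (h x ih').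
        have [e' He' [Hx1 Hx2]] := I7 x Hxk Hxc Hh0; exists e'; first exact: Hsub.
        by rewrite F1g.
    + move=> t1 Ht1; apply: I8; by rewrite inE Ht1 orbT.
    + move=> x; case: (eqVneq x s') => [-> _ | Nx]; first by rewrite !inE eqxx.
      rewrite F1 // => /I9 H; by rewrite !inE H orbT.
  case E: (h s' ih') => [v|]; last by apply: Hmain; left; split => //; left.
  rewrite /old; case: (boolP (s' \in kn)) => Hs'k; last by apply: Hmain; right; exists v.
  have Hle : g' <= gof ip s' by exact: F4 (Hdef _ Hs'k).
  case: ltP => Hlt.
  + have -> : cl :\ s' = cl.
      apply/setP => x; rewrite !inE; case: (eqVneq x s') => [-> | _] //=.
      apply/esym/negbTE/negP => Hin; move: Hlt; by rewrite /g' F3 // ltxx.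
    by apply: Hmain; right; exists v.
  + apply: Hmain; left; split => //; right; split => //; apply/eqP; by rewrite eq_le Hle Hlt.
Qed.

Lemma reach_inv (R : realType) (M : TS R) (sh : source (ts_S M) (ts_L M)) (h : dyn_heuristic sh) :
  dyn_consistent h -> dyn_monotonic h ->
  forall c, astar_reachable h true c -> inv h c.
Proof.
move=> Hc Hm c; elim => [|c0 c1 _ IH Hs]; first exact: init_inv.
exact: (step_inv Hc Hm IH Hs).1.
Qed.

Theorem theorem7 (R : realType) (M : TS R)
  (sh : source (ts_S M) (ts_L M)) (h : dyn_heuristic sh) :
  wf_TS M ->
  heuristic_nonneg h ->
  dyn_consistent h ->
  dyn_monotonic h ->
  forall c c', astar_reachable h true c -> astar_step h true c c' ->
    c_closed c \subset c_closed c'.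
Proof.
move=> _ _ Hc Hm c c' Hr Hs.
exact: (step_inv Hc Hm (reach_inv Hc Hm Hr) Hs).2.
Qed.
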